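(* Consider the scaled induction machine model with state $x=(\tilde i_{s\alpha},\tilde i_{s\beta},\tilde\psi_{r\alpha},\tilde\psi_{r\beta},\omega_e,T_r)^T$, input $\mathcal{V}_s\in\mathbb{R}^2$ (differentiable in time): $$\dot{\tilde{\mathcal{I}}}_s=\mathcal{V}_s+a\tilde{\mathcal{I}}_s+\gamma\tilde\Psi_r,\quad \dot{\tilde\Psi}_r=-\gamma\tilde\Psi_r-(a-b)\tilde{\mathcal{I}}_s,\quad \dot\omega_e=\tfrac{c}{J}\tilde{\mathcal{I}}_s^T\mathbf{J}_2\tilde\Psi_r-\tfrac{p}{J}T_r,\quad \dot T_r=0,$$ with $\gamma=\frac{1}{\tau_r}\mathbf{I}_2-\omega_e\mathbf{J}_2$, $\mathbf{J}_2=\begin{bmatrix}0&-1\\1&0\end{bmatrix}$, and output $y=\tilde{\mathcal{I}}_s$. Let $\mathcal{O}(x)$ be the $6\times6$ matrix whose rows are the gradients with respect to $x$ (columns in the order above) of $\tilde i_{s\alpha},\tilde i_{s\beta},\mathcal{L}_f\tilde i_{s\alpha},\mathcal{L}_f\tilde i_{s\beta},\mathcal{L}_f^2\tilde i_{s\alpha},\mathcal{L}_f^2\tilde i_{s\beta}$. Writing $\Psi_r=(\psi_{r\alpha},\psi_{r\beta})^T=\tilde\Psi_r/k_r$, one has $$\det\mathcal{O}(x)=\frac{p}{J}\frac{k_r^2}{\tau_r^2}\Big[\tau_r\dot\omega_e\big(\psi_{r\alpha}^2+\psi_{r\beta}^2\big)-\big(1+\tau_r^2\omega_e^2\big)\Big(\dot\psi_{r\alpha}\psi_{r\beta}-\dot\psi_{r\beta}\psi_{r\alpha}\Big)\Big],$$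 where $\dot\omega_e,\dot\psi_{r\alpha},\dot\psi_{r\beta}$ denote the right-hand sides of the model (functions of the state).
   Context: $a=-R_\sigma/L_\sigma$, $b=-R_s/L_\sigma$, $c=p^2/L_\sigma$, $k_r=M/L_r$, $\tau_r=L_r/R_r$, $L_\sigma=\sigma L_s$, $\sigma=1-M^2/(L_sL_r)$, $R_\sigma=R_s+k_r^2R_r$; $\tilde{\mathcal{I}}_s=L_\sigma\mathcal{I}_s$, $\tilde\Psi_r=k_r\Psi_r$; $p,J,\tau_r,k_r>0$. Lie derivatives: $\mathcal{L}_f^0h=h$, $\mathcal{L}_f^{k+1}h$ is the time derivative of $\mathcal{L}_f^kh$ along the model (terms involving $\dot{\mathcal{V}}_s$ do not depend on $x$). *)

(* Defs.v *)
From Stdlib Require Import Reals ClassicalEpsilon.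
Open Scope R_scope.

Record IMParams := mkIMParams {
  Rs : R; Rr : R; Ls : R; Lr : R; Mi : R; p : R; J : R }.

Definition sigma (P : IMParams) : R := 1 - (Mi P)^2 / (Ls P * Lr P).
Definition L_sigma (P : IMParams) : R := sigma P * Ls P.
Definition k_r (P : IMParams) : R := Mi P / Lr P.
Definition tau_r (P : IMParams) : R := Lr P / Rr P.
Definition R_sigma (P : IMParams) : R := Rs P + (k_r P)^2 * Rr P.
Definition a_c (P : IMParams) : R := - R_sigma P / L_sigma P.
Definition b_c (P : IMParams) : R := - Rs P / L_sigma P.
Definition c_c (P : IMParams) : R := (p P)^2 / L_sigma P.

(** State x = (i_sa, i_sb, psi_ra, psi_rb, omega_e, T_r) (scaled), indices 0..5. *)
Definition state := nat -> R.

(** Total derivative operator: the derivative of g at t when it exists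
    (chosen by classical description; junk value otherwise). *)
Definition deriv_at (g : R -> R) (t : R) : R :=
  epsilon (inhabits 0) (fun l => derivable_pt_lim g t l).

Definition upd (x : state) (j : nat) (u : R) : state :=
  fun k => if Nat.eqb k j then u else x k.

Definition pderiv (h : state -> R) (x : state) (j : nat) : R :=
  deriv_at (fun u => h (upd x j u)) (x j).

(** Right-hand side of the scaled model, with input V = (V1, V2) (functions of time).
    gamma = (1/tau_r) I2 - omega_e J2,  J2 = [[0,-1],[1,0]]. *)
Definition field (P : IMParams) (V1 V2 : R -> R) (t : R) (x : state) (j : nat) : R :=
  let ia := x 0%nat in let ib := x 1%nat in
  let pa := x 2%nat in let pb := x 3%nat in
  let w := x 4%nat in let Tr := x 5%nat in
  let a := a_c P in let b := b_c P in let c := c_c P in let tr := tau_r P in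
  match j with
  | 0%nat => V1 t + a * ia + (pa / tr + w * pb)
  | 1%nat => V2 t + a * ib + (pb / tr - w * pa)
  | 2%nat => - (pa / tr + w * pb) - (a - b) * ia
  | 3%nat => - (pb / tr - w * pa) - (a - b) * ib
  | 4%nat => c / J P * (ia * (- pb) + ib * pa) - p P / J P * Tr
  | _ => 0
  end.

(** Lie derivative of a (time-dependent) function g along the model:
    the time derivative of g along trajectories. *)
Definition lie (P : IMParams) (V1 V2 : R -> R) (g : R -> state -> R) : R -> state -> R :=
  fun t x => deriv_at (fun s => g s x) t
             + sum_f_R0 (fun j => pderiv (g t) x j * field P V1 V2 t x j) 5.

Fixpoint lie_iter (P : IMParams) (V1 V2 : R -> R) (k : nat) (g : R -> state -> R)
  : R -> state -> R :=
  match k with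
  | O => g
  | S k' => lie P V1 V2 (lie_iter P V1 V2 k' g)
  end.

Definition out_a : R -> state -> R := fun _ x => x 0%nat.
Definition out_b : R -> state -> R := fun _ x => x 1%nat.

Definition obs_row_fun (P : IMParams) (V1 V2 : R -> R) (i : nat) : R -> state -> R :=
  match i with
  | 0%nat => out_a
  | 1%nat => out_b
  | 2%nat => lie_iter P V1 V2 1 out_a
  | 3%nat => lie_iter P V1 V2 1 out_b
  | 4%nat => lie_iter P V1 V2 2 out_a
  | _ => lie_iter P V1 V2 2 out_b
  end.

Definition obs_matrix (P : IMParams) (V1 V2 : R -> R) (t : R) (x : state)
  : nat -> nat -> R :=
  fun i j => pderiv (obs_row_fun P V1 V2 i t) x j.

Definition minor (M : nat -> nat -> R) (j : nat) : nat -> nat -> R :=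
  fun r c => M (S r) (if Nat.ltb c j then c else S c).

Fixpoint det (n : nat) (M : nat -> nat -> R) : R :=
  match n with
  | O => 1
  | S m => sum_f_R0 (fun j => (-1)^j * M 0%nat j * det m (minor M j)) m
  end.

(* Main.v *)
Require Import Defs.
From Stdlib Require Import Reals Lra ClassicalEpsilon FunctionalExtensionality.
From Coquelicot Require Import Coquelicot.
Open Scope R_scope.

Lemma deriv_at_eq g t l : derivable_pt_lim g t l -> deriv_at g t = l.
Proof.
  intros H. unfold deriv_at.
  assert (E : exists l', derivable_pt_lim g t l') by (exists l; exact H).
  pose proof (epsilon_spec (inhabits 0) _ E) as H2.
  exact (uniqueness_limite _ _ _ _ H2 H).
Qed.

Lemma pderiv_lim h x j D :
  derivable_pt_lim (fun u => h (upd x j u)) (x j) D -> pderiv h x j = D.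
Proof. intros H; unfold pderiv; apply deriv_at_eq; exact H. Qed.


Lemma L1a P V1 V2 s : lie_iter P V1 V2 1 out_a s = fun y => field P V1 V2 s y 0.
Proof.
  apply functional_extensionality; intro y. simpl. unfold lie.
  rewrite (deriv_at_eq _ _ 0) by apply derivable_pt_lim_const.
  cbn [sum_f_R0].
  rewrite (pderiv_lim _ _ 0 1), (pderiv_lim _ _ 1 0), (pderiv_lim _ _ 2 0),
    (pderiv_lim _ _ 3 0), (pderiv_lim _ _ 4 0), (pderiv_lim _ _ 5 0).
  all: try (apply is_derive_Reals; unfold upd, out_a; simpl; auto_derive; [tauto| ring]).
  unfold field; simpl; ring.
Qed.

Lemma L1b P V1 V2 s : lie_iter P V1 V2 1 out_b s = fun y => field P V1 V2 s y 1.
Proof.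
  apply functional_extensionality; intro y. simpl. unfold lie.
  rewrite (deriv_at_eq _ _ 0) by apply derivable_pt_lim_const.
  cbn [sum_f_R0].
  rewrite (pderiv_lim _ _ 0 0), (pderiv_lim _ _ 1 1), (pderiv_lim _ _ 2 0),
    (pderiv_lim _ _ 3 0), (pderiv_lim _ _ 4 0), (pderiv_lim _ _ 5 0).
  all: try (apply is_derive_Reals; unfold upd, out_b; simpl; auto_derive; [tauto| ring]).
  unfold field; simpl; ring.
Qed.

Lemma L1a' P V1 V2 : lie_iter P V1 V2 1 out_a = fun s y => field P V1 V2 s y 0.
Proof. apply functional_extensionality; intro s; apply L1a. Qed.
Lemma L1b' P V1 V2 : lie_iter P V1 V2 1 out_b = fun s y => field P V1 V2 s y 1.
Proof. apply functional_extensionality; intro s; apply L1b. Qed.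

Ltac pdt := apply is_derive_Reals; unfold upd, field; simpl; auto_derive;
  [ repeat split; auto | field; repeat split; auto ].

Lemma lie2 P V1 V2 g : lie_iter P V1 V2 2 g = lie P V1 V2 (lie_iter P V1 V2 1 g).
Proof. reflexivity. Qed.

Lemma L2a P V1 V2 (hV1 : derivable V1) t (ht : tau_r P <> 0) (hJ : J P <> 0) :
  lie_iter P V1 V2 2 out_a t = fun y =>
    Derive V1 t + a_c P * field P V1 V2 t y 0 + field P V1 V2 t y 2 / tau_r P
    + y 3%nat * field P V1 V2 t y 4 + y 4%nat * field P V1 V2 t y 3.
Proof.
  apply functional_extensionality; intro y.
  rewrite lie2.
  rewrite L1a'. unfold lie.
  rewrite (deriv_at_eq _ _ (Derive V1 t)).
  2:{ apply is_derive_Reals. unfold field; simpl. auto_derive.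
      - apply ex_derive_Reals_1, hV1.
      - rewrite Rmult_1_l; reflexivity. }
  cbn [sum_f_R0].
  rewrite (pderiv_lim _ _ 0 (a_c P)), (pderiv_lim _ _ 1 0), (pderiv_lim _ _ 2 (1 / tau_r P)),
    (pderiv_lim _ _ 3 (y 4%nat)), (pderiv_lim _ _ 4 (y 3%nat)), (pderiv_lim _ _ 5 0).
  all: try pdt.
  unfold field; simpl; field; repeat split; auto.
Qed.

Lemma L2b P V1 V2 (hV2 : derivable V2) t (ht : tau_r P <> 0) (hJ : J P <> 0) :
  lie_iter P V1 V2 2 out_b t = fun y =>
    Derive V2 t + a_c P * field P V1 V2 t y 1 + field P V1 V2 t y 3 / tau_r P
    - y 2%nat * field P V1 V2 t y 4 - y 4%nat * field P V1 V2 t y 2.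
Proof.
  apply functional_extensionality; intro y.
  rewrite lie2.
  rewrite L1b'. unfold lie.
  rewrite (deriv_at_eq _ _ (Derive V2 t)).
  2:{ apply is_derive_Reals. unfold field; simpl. auto_derive.
      - apply ex_derive_Reals_1, hV2.
      - rewrite Rmult_1_l; reflexivity. }
  cbn [sum_f_R0].
  rewrite (pderiv_lim _ _ 0 0), (pderiv_lim _ _ 1 (a_c P)), (pderiv_lim _ _ 2 (- y 4%nat)),
    (pderiv_lim _ _ 3 (1 / tau_r P)), (pderiv_lim _ _ 4 (- y 2%nat)), (pderiv_lim _ _ 5 0).
  all: try pdt.
  unfold field; simpl; field; repeat split; auto.
Qed.

Section Rows.
Variables (P : IMParams) (V1 V2 : R -> R) (t : R) (x : state).
Let a := a_c P.
Let b := b_c P.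
Let tr := tau_r P.
Let cJ := c_c P / J P.
Let pJ := p P / J P.
Let f k := field P V1 V2 t x k.

Definition row0 (j : nat) : R := match j with 0%nat => 1 | _ => 0 end.
Definition row1 (j : nat) : R := match j with 1%nat => 1 | _ => 0 end.
Definition row2 (j : nat) : R := match j with
  | 0%nat => a | 2%nat => 1 / tr | 3%nat => x 4%nat | 4%nat => x 3%nat | _ => 0 end.
Definition row3 (j : nat) : R := match j with
  | 1%nat => a | 2%nat => - x 4%nat | 3%nat => 1 / tr | 4%nat => - x 2%nat | _ => 0 end.
Definition row4 (j : nat) : R := match j with
  | 0%nat => a*a - (a - b)/tr - x 3%nat*cJ*x 3%nat
  | 1%nat => x 3%nat*cJ*x 2%nat - x 4%nat*(a-b)
  | 2%nat => a/tr - 1/tr/tr + x 3%nat*cJ*x 1%nat + x 4%nat*x 4%nat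
  | 3%nat => a*x 4%nat - x 4%nat/tr + f 4%nat - x 3%nat*cJ*x 0%nat - x 4%nat/tr
  | 4%nat => a*x 3%nat - x 3%nat/tr + f 3%nat + x 4%nat*x 2%nat
  | 5%nat => - x 3%nat*pJ
  | _ => 0 end.
Definition row5 (j : nat) : R := match j with
  | 0%nat => x 2%nat*cJ*x 3%nat + x 4%nat*(a-b)
  | 1%nat => a*a - (a-b)/tr - x 2%nat*cJ*x 2%nat
  | 2%nat => -a*x 4%nat + x 4%nat/tr - f 4%nat - x 2%nat*cJ*x 1%nat + x 4%nat/tr
  | 3%nat => a/tr - 1/tr/tr + x 2%nat*cJ*x 0%nat + x 4%nat*x 4%nat
  | 4%nat => -a*x 2%nat + x 2%nat/tr - f 2%nat + x 4%nat*x 3%nat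
  | 5%nat => x 2%nat*pJ
  | _ => 0 end.
End Rows.

Ltac pdr := apply is_derive_Reals; unfold upd, field, row0, row1, row2, row3, row4, row5; simpl;
  auto_derive; [ repeat split; auto | field; repeat split; auto ].

Lemma gr0 x j : pderiv (fun y : state => y 0%nat) x j = row0 j.
Proof. apply pderiv_lim; destruct j as [|[|[|[|[|[|j]]]]]]; pdr. Qed.
Lemma gr1 x j : pderiv (fun y : state => y 1%nat) x j = row1 j.
Proof. apply pderiv_lim; destruct j as [|[|[|[|[|[|j]]]]]]; pdr. Qed.
Lemma gr2 P V1 V2 t x j (ht : tau_r P <> 0) :
  pderiv (fun y => field P V1 V2 t y 0) x j = row2 P x j.
Proof. apply pderiv_lim; destruct j as [|[|[|[|[|[|j]]]]]]; pdr. Qed.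
Lemma gr3 P V1 V2 t x j (ht : tau_r P <> 0) :
  pderiv (fun y => field P V1 V2 t y 1) x j = row3 P x j.
Proof. apply pderiv_lim; destruct j as [|[|[|[|[|[|j]]]]]]; pdr. Qed.

Lemma gr4 P V1 V2 t x j (ht : tau_r P <> 0) (hJ : J P <> 0) :
  pderiv (fun y =>
    Derive V1 t + a_c P * field P V1 V2 t y 0 + field P V1 V2 t y 2 / tau_r P
    + y 3%nat * field P V1 V2 t y 4 + y 4%nat * field P V1 V2 t y 3) x j
  = row4 P V1 V2 t x j.
Proof. apply pderiv_lim; destruct j as [|[|[|[|[|[|j]]]]]]; pdr. Qed.
Lemma gr5 P V1 V2 t x j (ht : tau_r P <> 0) (hJ : J P <> 0) :
  pderiv (fun y =>
    Derive V2 t + a_c P * field P V1 V2 t y 1 + field P V1 V2 t y 3 / tau_r P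
    - y 2%nat * field P V1 V2 t y 4 - y 4%nat * field P V1 V2 t y 2) x j
  = row5 P V1 V2 t x j.
Proof. apply pderiv_lim; destruct j as [|[|[|[|[|[|j]]]]]]; pdr. Qed.

Theorem mainTheorem7 (P : IMParams) (V1 V2 : R -> R)
  (hV1 : derivable V1) (hV2 : derivable V2)
  (hp : 0 < p P) (hJ : 0 < J P) (htau : 0 < tau_r P) (hk : 0 < k_r P)
  (t : R) (x : state) :
  let psi_a := x 2%nat / k_r P in
  let psi_b := x 3%nat / k_r P in
  let dpsi_a := field P V1 V2 t x 2 / k_r P in
  let dpsi_b := field P V1 V2 t x 3 / k_r P in
  let domega := field P V1 V2 t x 4 in
  let omega := x 4%nat in
  det 6 (obs_matrix P V1 V2 t x)
  = p P / J P * ((k_r P)^2 / (tau_r P)^2)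
    * (tau_r P * domega * (psi_a^2 + psi_b^2)
       - (1 + (tau_r P)^2 * omega^2) * (dpsi_a * psi_b - dpsi_b * psi_a)).
Proof.
  intros.
  assert (ht : tau_r P <> 0) by lra.
  assert (hJ' : J P <> 0) by lra.
  assert (hk' : k_r P <> 0) by lra.
  assert (HM : obs_matrix P V1 V2 t x = fun i j => match i with
     | 0%nat => row0 j | 1%nat => row1 j | 2%nat => row2 P x j
     | 3%nat => row3 P x j | 4%nat => row4 P V1 V2 t x j | _ => row5 P V1 V2 t x j end).
  { apply functional_extensionality; intro i; apply functional_extensionality; intro j.
    unfold obs_matrix.
    destruct i as [|[|[|[|[|i]]]]]; cbn [obs_row_fun].
    - apply gr0.
    - apply gr1.
    - rewrite L1a'. apply gr2; auto.
    - rewrite L1b'. apply gr3; auto.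
    - rewrite (L2a P V1 V2 hV1 t ht hJ'). apply gr4; auto.
    - rewrite (L2b P V1 V2 hV2 t ht hJ'). apply gr5; auto. }
  rewrite HM. unfold psi_a, psi_b, dpsi_a, dpsi_b, domega, omega.
  unfold det, minor. simpl.
  unfold row4, row5, row2, row3, field. simpl.
  field. auto.
Qed.
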